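(* Let $G$ be a locally compact group with a compact open normal subgroup $A$ such that $G/A$ is isomorphic to an infinite subgroup of the (discrete) group $\mathbb{Q}$ of rational numbers. Then $G$ contains a discrete subgroup $H\cong G/A$ such that $G=AH$ and $A\cap H=\{1\}$, so that $G$ is the semidirect product $A\rtimes H$. *)

(* Defs.v *)
From Stdlib Require List.
From HB Require Import structures.
From mathcomp Require Import all_boot all_order all_algebra.
Set Implicit Arguments. Unset Strict Implicit. Unset Printing Implicit Defensive.
Import GRing.Theory.
Local Open Scope ring_scope.

Definition gset (T : Type) := T -> Prop.

Definition is_topology (T : Type) (opn : gset T -> Prop) : Prop :=
  [/\ opn (fun _ => True),
      (forall F : gset T -> Prop, (forall U, F U -> opn U) ->
          opn (fun x => exists2 U, F U & U x)) &
      (forall U V, opn U -> opn V -> opn (fun x => U x /\ V x))].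

Definition compact_set (T : Type) (opn : gset T -> Prop) (K : gset T) : Prop :=
  forall F : gset T -> Prop,
    (forall U, F U -> opn U) ->
    (forall x, K x -> exists2 U, F U & U x) ->
    exists s : list (gset T),
      (forall U, List.In U s -> F U) /\
      (forall x, K x -> exists2 U, List.In U s & U x).

Definition hausdorff (T : Type) (opn : gset T -> Prop) : Prop :=
  forall x y : T, x <> y ->
    exists U V, [/\ opn U, opn V, U x, V y & forall z, U z -> V z -> False].

Definition locally_compact (T : Type) (opn : gset T -> Prop) : Prop :=
  forall x : T, exists U K, [/\ opn U, U x, compact_set opn K & forall z, U z -> K z].

Record LCGroup := {
  carrier :> Type;
  gmul : carrier -> carrier -> carrier;
  ginv : carrier -> carrier;
  gone : carrier;
  gmulA : forall x y z, gmul x (gmul y z) = gmul (gmul x y) z;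
  gmul1 : forall x, gmul gone x = x;
  gmulV : forall x, gmul (ginv x) x = gone;
  gopen : gset carrier -> Prop;
  gtop : is_topology gopen;
  (* (x, y) |-> x * y^-1 is continuous for the product topology *)
  gcont : forall (W : gset carrier) x y, gopen W -> W (gmul x (ginv y)) ->
     exists U V, [/\ gopen U, gopen V, U x, V y &
                     forall u v, U u -> V v -> W (gmul u (ginv v))];
  ghaus : hausdorff gopen;
  glc : locally_compact gopen
}.

Section Groups.
Variable G : LCGroup.

Definition subgroup (S : gset G) : Prop :=
  [/\ S (gone G),
      (forall x y, S x -> S y -> S (gmul x y)) &
      (forall x, S x -> S (ginv x))].

Definition normal_subgroup (S : gset G) : Prop :=
  subgroup S /\ forall g x, S x -> S (gmul (ginv g) (gmul x g)).

Definition discrete_subset (H : gset G) : Prop :=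
  forall h, H h -> exists2 U, @gopen G U & forall z, (U z /\ H z) <-> z = h.

Definition hom_to_rat (f : G -> rat) : Prop :=
  forall x y, f (gmul x y) = f x + f y.

End Groups.

Definition infinite_image (T : Type) (P : gset T) (f : T -> rat) : Prop :=
  ~ exists s : seq rat, forall x, P x -> f x \in s.

(* Main.v *)
Require Import Defs.
From HB Require Import structures.
From mathcomp Require Import all_boot all_order all_algebra.
From Stdlib Require Import ClassicalEpsilon Classical.
Set Implicit Arguments. Unset Strict Implicit. Unset Printing Implicit Defensive.
Import GRing.Theory Num.Theory.
Local Open Scope ring_scope.

Section GroupFacts.
Variable G : LCGroup.
Local Notation m := (@gmul G).
Local Notation iv := (@ginv G).
Local Notation e := (@gone G).
Local Notation opn := (@gopen G).

Lemma mulgV' (x : G) : m x (iv x) = e.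
Proof.
have h1 : m (iv (iv x)) (iv x) = e by apply: gmulV.
rewrite -[m x (iv x)]gmul1 -{1}h1 -gmulA [m (iv x) (m x (iv x))]gmulA gmulV gmul1.
exact: h1.
Qed.

Lemma mulg1' (x : G) : m x e = x.
Proof. by rewrite -(gmulV x) gmulA mulgV' gmul1. Qed.

Lemma invK' (x : G) : iv (iv x) = x.
Proof. by rewrite -[iv (iv x)]mulg1' -(gmulV x) gmulA gmulV gmul1. Qed.

Lemma mul_cancel_l (x y z : G) : m x y = m x z -> y = z.
Proof. by move=> h; rewrite -[y]gmul1 -[z]gmul1 -(gmulV x) -!gmulA h. Qed.

Lemma invM' (x y : G) : iv (m x y) = m (iv y) (iv x).
Proof.
apply: (@mul_cancel_l (m x y)); rewrite mulgV' -gmulA [m y _]gmulA mulgV' gmul1.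
by rewrite mulgV'.
Qed.

Lemma inv1' : iv e = e.
Proof. by rewrite -[iv e]gmul1 mulgV'. Qed.

Definition cont (f : G -> G) := forall (W : gset G) x, opn W -> W (f x) ->
  exists U, [/\ opn U, U x & forall u, U u -> W (f u)].

Lemma open_and (U V : gset G) : opn U -> opn V -> opn (fun x => U x /\ V x).
Proof. by case: (gtop G) => _ _ h; apply: h. Qed.

Lemma open_true : opn (fun _ => True).
Proof. by case: (gtop G). Qed.

Lemma cont_const c : cont (fun _ => c).
Proof. move=> W x _ hW; exists (fun _ => True); split => //; exact: open_true. Qed.

Lemma cont_id : cont id.
Proof. by move=> W x oW hW; exists W. Qed.

Lemma cont_comp f g : cont f -> cont g -> cont (fun x => f (g x)).
Proof.
move=> cf cg W x oW hW.
have [U [oU Ux hU]] := cf W (g x) oW hW.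
have [V [oV Vx hV]] := cg U x oU Ux.
by exists V; split => // u /hV /hU.
Qed.

Lemma cont_inv : cont iv.
Proof.
move=> W x oW hW.
have := @gcont G W e x oW; rewrite gmul1 => /(_ hW) [U [V [oU oV Ue Vx hUV]]].
exists V; split => // v /(hUV e v Ue); by rewrite gmul1.
Qed.

Lemma cont_mul f g : cont f -> cont g -> cont (fun x => m (f x) (g x)).
Proof.
move=> cf cg W x oW hW.
have := @gcont G W (f x) (iv (g x)) oW; rewrite invK' => /(_ hW).
move=> [U [V [oU oV Ux Vx hUV]]].
have [O1 [o1 O1x h1]] := cf U x oU Ux.
have [O2 [o2 O2x h2]] := cont_comp cont_inv cg oV Vx.
exists (fun z => O1 z /\ O2 z); split; first exact: open_and.
  by split.
move=> u [/h1 hu /h2 hv]; have := hUV _ _ hu hv; by rewrite invK'.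
Qed.

Definition closedG (C : gset G) := forall x, ~ C x ->
  exists U, [/\ opn U, U x & forall z, U z -> ~ C z].

Lemma closed_pull (C : gset G) f : closedG C -> cont f -> closedG (fun x => C (f x)).
Proof.
move=> cC cf x nC; have [U [oU Ux hU]] := cC _ nC.
have [V [oV Vx hV]] := cf U x oU Ux.
by exists V; split => // z /hV /hU.
Qed.

Lemma closed_and (C D : gset G) : closedG C -> closedG D -> closedG (fun x => C x /\ D x).
Proof.
move=> cC cD x nCD.
have [Cx|nCx] := classic (C x).
  have nDx : ~ D x by move=> Dx; apply: nCD.
  have [U [oU Ux hU]] := cD _ nDx.
  by exists U; split => // z /hU h [].
have [U [oU Ux hU]] := cC _ nCx.
by exists U; split => // z /hU h [].
Qed.

Lemma closed_eq f c : cont f -> closedG (fun x => f x = c).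
Proof.
move=> cf x ne.
have [U [V [oU oV Ufx Vc disj]]] := ghaus ne.
have [O [oO Ox hO]] := cf U x oU Ufx.
exists O; split => // z /hO Uz ez; rewrite ez in Uz; exact: disj c Uz Vc.
Qed.

Lemma closed_image (K : gset G) f : compact_set opn K -> cont f ->
  closedG (fun z => exists a, K a /\ f a = z).
Proof.
move=> cK cf x nI.
pose F := fun O : gset G => opn O /\ exists V, [/\ opn V, V x & forall u, O u -> ~ V (f u)].
have [s [sF scov]] : exists s : list (gset G),
      (forall U, List.In U s -> F U) /\ (forall y, K y -> exists2 U, List.In U s & U y).
  apply: cK; first by move=> U [].
  move=> a Ka.
  have ne : f a <> x by move=> h; apply: nI; exists a.
  have [U [V [oU oV Ufa Vx disj]]] := ghaus ne.
  have [O [oO Oa hO]] := cf U a oU Ufa.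
  exists O => //; split => //; exists V; split => // u /hO Uu Vu; exact: disj _ Uu Vu.
have [V [oV Vx hV]] : exists V, [/\ opn V, V x & forall O, List.In O s -> forall u, O u -> ~ V (f u)].
  elim: s sF {scov} => [|O s IH] sF.
    by exists (fun _ => True); split => //; exact: open_true.
  have [oO [V1 [oV1 V1x h1]]] := sF O (or_introl erefl).
  have [V2 [oV2 V2x h2]] := IH (fun U hU => sF U (or_intror hU)).
  exists (fun z => V1 z /\ V2 z); split => //; first exact: open_and.
  move=> O' [<-|inO'] u Ou [v1 v2]; first exact: h1 Ou v1.
  exact: h2 inO' u Ou v2.
exists V; split => // z Vz [a [Ka faz]].
have [O inO Oa] := scov a Ka.
by apply: (hV O inO a Oa); rewrite faz.
Qed.

Lemma nested (K : gset G) (C : nat -> gset G) : compact_set opn K ->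
  (forall d x, C d.+1 x -> C d x) -> (forall d, closedG (C d)) ->
  (forall d, exists a, K a /\ C d a) -> exists a, K a /\ forall d, C d a.
Proof.
move=> cK dec cC ne.
have mono : forall d D x, (d <= D)%N -> C D x -> C d x.
  move=> d D x /subnKC <-; elim: (D - d)%N => [|k IH]; first by rewrite addn0.
  by rewrite addnS => /dec /IH.
apply: NNPP => hno.
pose F := fun O : gset G => opn O /\ exists d, forall z, O z -> ~ C d z.
have [s [sF scov]] : exists s : list (gset G),
      (forall U, List.In U s -> F U) /\ (forall y, K y -> exists2 U, List.In U s & U y).
  apply: cK; first by move=> U [].
  move=> a Ka.
  have [d nC] : exists d, ~ C d a.
    apply: NNPP => h; apply: hno; exists a; split => // d.
    by apply: NNPP => h'; apply: h; exists d.
  have [U [oU Ua hU]] := cC d a nC.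
  by exists U => //; split => //; exists d.
have [D hD] : exists D, forall O, List.In O s -> forall z, O z -> ~ C D z.
  elim: s sF {scov} => [|O s IH] sF; first by exists 0%N.
  have [oO [d1 h1]] := sF O (or_introl erefl).
  have [d2 h2] := IH (fun U hU => sF U (or_intror hU)).
  exists (maxn d1 d2) => O' [<-|inO'] z Oz hC.
    by apply: (h1 z Oz); apply: (mono _ _ _ (leq_maxl d1 d2) hC).
  by apply: (h2 O' inO' z Oz); apply: (mono _ _ _ (leq_maxr d1 d2) hC).
have [a [Ka Ca]] := ne D.
have [O inO Oa] := scov a Ka.
exact: hD O inO a Oa Ca.
Qed.

End GroupFacts.

Import Order.TTheory.
From mathcomp Require Import ring lra.
Lemma Q0_zmul (Q0 : rat -> Prop) (Q00 : Q0 0) (Q0D : forall x y, Q0 x -> Q0 y -> Q0 (x + y))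
  (Q0N : forall x, Q0 x -> Q0 (- x)) (j : int) x : Q0 x -> Q0 (j%:~R * x).
Proof.
move=> Qx.
have hn : forall n : nat, Q0 (n%:R * x).
  elim=> [|n IH]; first by rewrite mul0r.
  by rewrite -addn1 natrD mulrDl mul1r; apply: Q0D.
case: j => n; first exact: hn.
by rewrite NegzE mulrNz mulNr; apply: Q0N; apply: hn.
Qed.

Lemma gen2 (Q0 : rat -> Prop) (Q00 : Q0 0) (Q0D : forall x y, Q0 x -> Q0 y -> Q0 (x + y))
  (Q0N : forall x, Q0 x -> Q0 (- x)) q r : 0 < q -> Q0 q -> Q0 r ->
  exists q', [/\ Q0 q', 0 < q', (exists k : nat, (0 < k)%N /\ q = k%:R * q') &
                exists j : int, r = j%:~R * q'].
Proof.
move=> q0 Qq Qr.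
set a := numq q; set b := denq q; set c := numq r; set d := denq r.
have b0 : 0 < b := denq_gt0 q. have d0 : 0 < d := denq_gt0 r.
have a0 : 0 < a by rewrite /a numq_gt0.
set g := gcdz (a * d) (c * b).
have g0 : 0 < g.
  rewrite lt_def gcdz_eq0 mulf_eq0 negb_and negb_or (gt_eqF a0) (gt_eqF d0) /=.
  by rewrite /g /gcdz.
have [k' hk'] := dvdzP (dvdz_gcdl (a * d) (c * b)).
have [j hj] := dvdzP (dvdz_gcdr (a * d) (c * b)).
have [u [v huv]] := Bezoutz (a * d) (c * b).
rewrite -/g in hk' hj huv.
have qE : q = a%:~R / b%:~R by rewrite divq_num_den.
have rE : r = c%:~R / d%:~R by rewrite divq_num_den.
have bd0 : (b * d)%:~R != 0 :> rat by rewrite intr_eq0 mulf_eq0 !gt_eqF.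
have b0' : b%:~R != 0 :> rat by rewrite intr_eq0 gt_eqF.
have d0' : d%:~R != 0 :> rat by rewrite intr_eq0 gt_eqF.
exists (g%:~R / (b * d)%:~R); split.
- have -> : g%:~R / (b * d)%:~R = u%:~R * q + v%:~R * r.
    rewrite -huv qE rE intrD !intrM; field.
    by apply/andP; split; [exact: d0' | exact: b0'].
  by apply: (Q0D); apply: (Q0_zmul Q00 Q0D Q0N).
- by rewrite divr_gt0 // ltr0z // mulr_gt0.
- have k'0 : 0 < k'.
    by rewrite -(pmulr_lgt0 _ g0) -hk' mulr_gt0.
  case: k' hk' k'0 => // n hn n0.
  exists n; split; first by [].
  rewrite qE -[n%:R]/((n%:Z)%:~R : rat).
  have -> : a%:~R / b%:~R = ((a * d)%:~R / (b * d)%:~R : rat).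
    rewrite !intrM; field; by apply/andP; split; [exact: d0' | exact: b0'].
  by rewrite hn intrM mulrA.
- exists j; rewrite rE.
  have -> : c%:~R / d%:~R = ((c * b)%:~R / (b * d)%:~R : rat).
    rewrite !intrM; field; by apply/andP; split; [exact: d0' | exact: b0'].
  by rewrite hj intrM mulrA.
Qed.

Unset Implicit Arguments.
Section Main.
Variables (G : LCGroup) (A : gset G) (phi : G -> rat).
Hypotheses (hAcpt : compact_set (@gopen G) A) (hAopen : @gopen G A)
  (hphi : hom_to_rat phi) (hker : forall x, phi x = 0 <-> A x)
  (hinf : infinite_image (fun _ => True) phi).
Local Notation m := (@gmul G).
Local Notation iv := (@ginv G).
Local Notation e := (@gone G).
Local Notation opn := (@gopen G).

Lemma phi1 : phi e = 0.
Proof. by move: (hphi e e); rewrite gmul1; lra. Qed.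

Lemma phiV x : phi (iv x) = - phi x.
Proof. by move: (hphi (iv x) x); rewrite gmulV phi1; lra. Qed.

Definition gpow (x : G) (k : nat) := iter k (m x) e.

Lemma gpowS x k : gpow x k.+1 = m x (gpow x k).
Proof. by []. Qed.

Lemma phi_pow x k : phi (gpow x k) = k%:R * phi x.
Proof.
elim: k => [|k IH]; first by rewrite mul0r phi1.
by rewrite gpowS hphi IH -add1n natrD mulrDl mul1r.
Qed.

Lemma cont_gpow k : cont (fun x : G => gpow x k).
Proof.
elim: k => [|k IH]; first exact: cont_const.
exact: (cont_mul (@cont_id G) IH).
Qed.

Definition Q0 x := exists g, phi g = x.

Lemma Q00 : Q0 0. Proof. by exists e; rewrite phi1. Qed.
Lemma Q0D x y : Q0 x -> Q0 y -> Q0 (x + y).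
Proof. by move=> [g <-] [h <-]; exists (m g h); rewrite hphi. Qed.
Lemma Q0N x : Q0 x -> Q0 (- x).
Proof. by move=> [g <-]; exists (iv g); rewrite phiV. Qed.

Lemma exists_pos : exists q, Q0 q /\ 0 < q.
Proof.
have [x nx] : exists x, phi x != 0.
  apply: NNPP => h; apply: hinf; exists [:: 0] => x _.
  rewrite inE; apply: NNPP => h'; apply: h; exists x; exact/negP.
case: (ltrgtP (phi x) 0) => hx; last by rewrite hx eqxx in nx.
  by exists (- phi x); split; [apply: Q0N; exists x | rewrite oppr_gt0].
by exists (phi x); split; [exists x|].
Qed.

Definition q0 := epsilon (inhabits 0) (fun q => Q0 q /\ 0 < q).
Lemma q0_spec : Q0 q0 /\ 0 < q0.
Proof. exact: (epsilon_spec (inhabits 0) _ exists_pos). Qed.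

Definition renum (n : nat) : rat := odflt 0 (@unpickle rat n).

Definition Pstep q rr q' := [/\ Q0 q', 0 < q', (exists k : nat, (0 < k)%N /\ q = k%:R * q') &
   (Q0 rr -> exists j : int, rr = j%:~R * q')].

Definition step q rr := epsilon (inhabits 0) (Pstep q rr).

Lemma step_spec q rr : Q0 q -> 0 < q -> Pstep q rr (step q rr).
Proof.
move=> Qq q0'; apply: epsilon_spec.
have [Qr|nQr] := classic (Q0 rr).
  have [q' [h1 h2 h3 h4]] := gen2 Q00 Q0D Q0N q0' Qq Qr.
  by exists q'; split.
exists q; split => //; first by exists 1%N; rewrite mul1r.
Qed.

Fixpoint qs n := match n with 0 => q0 | n.+1 => step (qs n) (renum n) end.

Lemma qs_pos n : Q0 (qs n) /\ 0 < qs n.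
Proof.
elim: n => [|n [h1 h2]]; first exact: q0_spec.
by have [] := step_spec _ (renum n) h1 h2.
Qed.

Lemma qs_step n : Pstep (qs n) (renum n) (qs n.+1).
Proof. by have [h1 h2] := qs_pos n; exact: step_spec. Qed.

Definition ks n := epsilon (inhabits 0%N) (fun k : nat => (0 < k)%N /\ qs n = k%:R * qs n.+1).
Lemma ks_spec n : (0 < ks n)%N /\ qs n = (ks n)%:R * qs n.+1.
Proof. rewrite /ks; apply: (epsilon_spec (inhabits 0%N) (fun k : nat => (0 < k)%N /\ qs n = k%:R * qs n.+1)); by case: (qs_step n). Qed.

Lemma Q0_union x : Q0 x -> exists n (j : int), x = j%:~R * qs n.
Proof.
move=> Qx; exists (pickle x).+1.
have [_ _ _ h] := qs_step (pickle x).
by move: h; rewrite /renum pickleK /=; apply.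
Qed.


Definition lift n := epsilon (inhabits e) (fun y => phi y = qs n).
Lemma lift_spec n : phi (lift n) = qs n.
Proof.
rewrite /lift; apply: (epsilon_spec (inhabits e) (fun y => phi y = qs n)).
by have [[g hg] _] := qs_pos n; exists g.
Qed.

Lemma X_lift n z : phi z = qs n -> A (m (iv (lift n)) z) /\ z = m (lift n) (m (iv (lift n)) z).
Proof.
move=> hz; split.
  by apply/hker; rewrite hphi phiV hz lift_spec addNr.
by rewrite gmulA mulgV' gmul1.
Qed.

Lemma phi_lift_A n a : A a -> phi (m (lift n) a) = qs n.
Proof. by move=> /hker ha; rewrite hphi ha addr0 lift_spec. Qed.

Fixpoint down (n d : nat) (y : G) : G :=
  match d with 0 => y | d.+1 => down n d (gpow y (ks (n + d))) end.

Lemma phi_down n d y : phi y = qs (n + d) -> phi (down n d y) = qs n.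
Proof.
elim: d y => [|d IH] y /=; first by rewrite addn0.
move=> hy; apply: IH; rewrite phi_pow hy addnS.
by have [_ ->] := ks_spec (n + d).
Qed.

Lemma down_succ n d y : down n d.+1 y = gpow (down n.+1 d y) (ks n).
Proof.
elim: d n y => [|d IH] n y; first by rewrite /= addn0.
rewrite -[down n d.+2 y]/(down n d.+1 (gpow y (ks (n + d.+1)))) (IH n).
rewrite -[down n.+1 d.+1 y]/(down n.+1 d (gpow y (ks (n.+1 + d)))) addSn addnS.
by [].
Qed.

Lemma cont_down n d : cont (down n d).
Proof.
elim: d => [|d IH]; first exact: cont_id.
exact: (cont_comp IH (cont_gpow (ks (n + d)))).
Qed.

Definition C n d z := exists y, phi y = qs (n + d) /\ down n d y = z.

Lemma C_dec n d z : C n d.+1 z -> C n d z.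
Proof.
move=> [y [hy <-]]; exists (gpow y (ks (n + d))); split => //.
by rewrite phi_pow hy addnS; have [_ ->] := ks_spec (n + d).
Qed.

Lemma C_X n d z : C n d z -> phi z = qs n.
Proof. by move=> [y [hy <-]]; apply: phi_down. Qed.

Lemma C_closed n d : closedG (C n d).
Proof.
have h := closed_image hAcpt (cont_comp (cont_down n d) (cont_mul (@cont_const G (lift (n + d))) (@cont_id G))).
move=> x nx.
have nI : ~ (exists a : G, A a /\ down n d (m (lift (n + d)) a) = x).
  move=> [a [Aa ha]]; apply: nx.
  by exists (m (lift (n + d)) a); split => //; apply: phi_lift_A.
have [U [oU Ux hU]] := h x nI.
exists U; split => // z Uz [y [hy hyz]]; apply: (hU z Uz).
have [h1 h2] := X_lift _ _ hy.
by exists (m (iv (lift (n + d))) y); split => //; rewrite -h2.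
Qed.

Lemma C_ne n d : exists z, C n d z.
Proof. by exists (down n d (lift (n + d))); exists (lift (n + d)); rewrite lift_spec. Qed.

Definition T n z := phi z = qs n /\ forall d, C n d z.

Lemma T_ne n : exists z, T n z.
Proof.
have hne : forall d, exists a, A a /\ C n d (m (lift n) a).
  move=> d; have [z hz] := C_ne n d.
  have [h1 h2] := X_lift _ _ (C_X _ _ _ hz).
  by exists (m (iv (lift n)) z); split => //; rewrite -h2.
have [a [Aa ha]] := nested (C := fun d a => C n d (m (lift n) a)) hAcpt
  (fun d a => @C_dec n d _)
  (fun d => closed_pull (C_closed n d) (cont_mul (@cont_const G (lift n)) (@cont_id G))) hne.
by exists (m (lift n) a); split => //; apply: phi_lift_A.
Qed.

Lemma T_step n g : T n g -> exists h, T n.+1 h /\ gpow h (ks n) = g.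
Proof.
move=> [_ Tg].
have hne : forall d, exists a, A a /\ (gpow (m (lift n.+1) a) (ks n) = g /\ C n.+1 d (m (lift n.+1) a)).
  move=> d; have [y [hy hyg]] := Tg d.+1.
  have hC : C n.+1 d (down n.+1 d y) by exists y; rewrite addSn -addnS.
  have [h1 h2] := X_lift _ _ (C_X _ _ _ hC).
  exists (m (iv (lift n.+1)) (down n.+1 d y)); split => //; rewrite -h2; split => //.
  by rewrite -down_succ.
have [a [Aa ha]] := nested (C := fun d a => gpow (m (lift n.+1) a) (ks n) = g /\ C n.+1 d (m (lift n.+1) a)) hAcpt
  (fun d a '(conj h1 h2) => conj h1 (@C_dec n.+1 d _ h2))
  (fun d => closed_and
     (closed_eq (c:=g) (cont_comp (cont_gpow (ks n)) (cont_mul (@cont_const G (lift n.+1)) (@cont_id G))))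
     (closed_pull (C_closed n.+1 d) (cont_mul (@cont_const G (lift n.+1)) (@cont_id G)))) hne.
exists (m (lift n.+1) a); split; last by case: (ha 0%N).
split; first exact: phi_lift_A.
by move=> d; case: (ha d).
Qed.

Fixpoint gs n := match n with
  | 0 => epsilon (inhabits e) (T 0)
  | n.+1 => epsilon (inhabits e) (fun h => T n.+1 h /\ gpow h (ks n) = gs n) end.

Lemma gs_T n : T n (gs n).
Proof.
elim: n => [|n IH]; first by apply: epsilon_spec; exact: T_ne.
have := @epsilon_spec _ (inhabits e) (fun h => T n.+1 h /\ gpow h (ks n) = gs n) (T_step _ _ IH).
by case.
Qed.

Lemma gs_pow n : gpow (gs n.+1) (ks n) = gs n.
Proof.
have := @epsilon_spec _ (inhabits e) (fun h => T n.+1 h /\ gpow h (ks n) = gs n) (T_step _ _ (gs_T n)).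
by case.
Qed.


Lemma gpowD x a b : gpow x (a + b) = m (gpow x a) (gpow x b).
Proof.
elim: a => [|a IH]; first by rewrite add0n /= gmul1.
by rewrite addSn !gpowS IH gmulA.
Qed.

Lemma gpowC x a b : m (gpow x a) (gpow x b) = m (gpow x b) (gpow x a).
Proof. by rewrite -!gpowD addnC. Qed.

Lemma commV (u v : G) : m u v = m v u -> m (iv u) v = m v (iv u).
Proof.
move=> h.
have : m u (m (iv u) v) = m u (m v (iv u)).
  by rewrite gmulA mulgV' gmul1 gmulA h -gmulA mulgV' mulg1'.
exact: mul_cancel_l.
Qed.

Definition Pw x z := exists a b : nat, z = m (gpow x a) (iv (gpow x b)).

Lemma Pw_mul x y z : Pw x y -> Pw x z -> Pw x (m y z).
Proof.
move=> [a [b ->]] [c [d ->]]; exists (a + c)%N, (d + b)%N.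
rewrite gpowD gpowD invM'.
rewrite -!gmulA; congr (m _ _).
by rewrite gmulA (commV _ _ (gpowC x b c)) -gmulA.
Qed.

Lemma Pw_inv x y : Pw x y -> Pw x (iv y).
Proof. by move=> [a [b ->]]; exists b, a; rewrite invM' invK'. Qed.

Inductive cyc (x : G) : G -> Prop :=
  | cyc_x : cyc x x
  | cyc_1 : cyc x e
  | cyc_mul y z : cyc x y -> cyc x z -> cyc x (m y z)
  | cyc_inv y : cyc x y -> cyc x (iv y).

Lemma cyc_Pw x z : cyc x z -> Pw x z.
Proof.
elim=> [| |y1 y2 _ hy _ hz|y1 _ hy].
- by exists 1%N, 0%N; rewrite /= inv1' !mulg1'.
- by exists 0%N, 0%N; rewrite /= inv1' mulg1'.
- exact: Pw_mul.
- exact: Pw_inv.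
Qed.

Lemma cyc_sub x y z : cyc x y -> cyc y z -> cyc x z.
Proof.
move=> hy; elim=> [| |u v _ hu _ hv|u _ hu].
- exact: hy.
- exact: cyc_1.
- exact: cyc_mul.
- exact: cyc_inv.
Qed.

Lemma cyc_pow x k : cyc x (gpow x k).
Proof. elim: k => [|k IH]; [exact: cyc_1 | exact: cyc_mul (cyc_x _) IH]. Qed.


Lemma gs_mono n d : cyc (gs (n + d)) (gs n).
Proof.
elim: d => [|d IH]; first by rewrite addn0; exact: cyc_x.
apply: (cyc_sub _ (gs (n + d))) => //.
by rewrite addnS -[gs (n + d)]gs_pow; apply: cyc_pow.
Qed.

Definition H z := exists n, cyc (gs n) z.

Lemma H_lift z : H z -> forall N, exists n, (N <= n)%N /\ cyc (gs n) z.
Proof.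
move=> [n hn] N; exists (maxn n N); split; first exact: leq_maxr.
have := gs_mono n (maxn n N - n); rewrite subnKC ?leq_maxl // => h.
exact: cyc_sub h hn.
Qed.

Lemma qs_neq0 n : qs n != 0.
Proof. by have [_ h] := qs_pos n; rewrite gt_eqF. Qed.

Lemma gs_phi n : phi (gs n) = qs n.
Proof. by case: (gs_T n). Qed.

Lemma cyc_ker n z : cyc (gs n) z -> phi z = 0 -> z = e.
Proof.
move=> /cyc_Pw [a [b ->]]; rewrite hphi phiV !phi_pow gs_phi -mulrBl.
move/eqP; rewrite mulf_eq0 (negbTE (qs_neq0 n)) orbF subr_eq0 eqr_nat => /eqP ->.
exact: mulgV'.
Qed.


Lemma H_inj x y : H x -> H y -> phi x = phi y -> x = y.
Proof.
move=> [n cx] hy hxy.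
have [n' [nn' cy]] := H_lift _ hy n.
have cx' : cyc (gs n') x.
  by have := gs_mono n (n' - n); rewrite subnKC // => h; exact: cyc_sub h cx.
have := cyc_ker n' (m x (iv y)) (cyc_mul _ _ _ cx' (cyc_inv _ _ cy)).
rewrite hphi phiV hxy addrN => /(_ erefl) h.
by rewrite -[x]mulg1' -(gmulV y) gmulA h gmul1.
Qed.

Lemma H_onto q : Q0 q -> exists h, H h /\ phi h = q.
Proof.
move=> /Q0_union [n [j ->]].
case: j => k.
  exists (gpow (gs n) k); split; first by exists n; apply: cyc_pow.
  by rewrite phi_pow gs_phi.
exists (iv (gpow (gs n) k.+1)); split.
  by exists n; apply: cyc_inv; apply: cyc_pow.
by rewrite phiV phi_pow gs_phi NegzE mulrNz mulNr.
Qed.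

Lemma H_two x y : H x -> H y -> exists n, cyc (gs n) x /\ cyc (gs n) y.
Proof.
move=> [n cx] hy.
have [n' [nn' cy]] := H_lift _ hy n.
exists n'; split => //.
by have := gs_mono n (n' - n); rewrite subnKC // => h; exact: cyc_sub h cx.
Qed.

Lemma main_result :
  exists H : gset G,
    [/\ subgroup H,
        discrete_subset H,
        (exists psi : G -> rat,
           [/\ forall x y, H x -> H y -> psi (gmul x y) = psi x + psi y,
               forall x y, H x -> H y -> psi x = psi y -> x = y &
               forall q, (exists h, H h /\ psi h = q) <-> (exists g, phi g = q)]),
        (forall g, exists a h, [/\ A a, H h & g = gmul a h]) &
        (forall x, A x -> H x -> x = gone G)].
Proof.
have He : H e by exists 0%N; apply: cyc_1.
exists H; split.
- split => //.
  + move=> x y hx hy; have [n [cx cy]] := H_two _ _ hx hy.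
    by exists n; apply: cyc_mul.
  + by move=> x [n cx]; exists n; apply: cyc_inv.
- move=> h hh.
  have hAh : A (m h (iv h)) by apply/hker; rewrite hphi phiV addrN.
  have [U [oU Uh hU]] := cont_mul (@cont_id G) (@cont_const G (iv h)) hAopen hAh.
  exists U => // z; split; last by move=> ->.
  move=> [Uz Hz]; apply: H_inj => //.
  by have /hker := hU z Uz; rewrite hphi phiV => /eqP; rewrite subr_eq0 => /eqP.
- exists phi; split => //.
  + exact: H_inj.
  + move=> q; split; first by move=> [h [_ <-]]; exists h.
    exact: H_onto.
- move=> g; have [h [hh hg]] := H_onto (phi g) (ex_intro _ g erefl).
  exists (gmul g (ginv h)), h; split => //.
    by apply/hker; rewrite hphi phiV hg addrN.
  by rewrite -gmulA gmulV mulg1'.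
- move=> x Ax hx; apply: H_inj => //.
  by rewrite phi1; apply/hker.
Qed.

End Main.

Theorem theorem4p6 (G : LCGroup) (A : gset G)
  (hA : normal_subgroup A) (hAopen : @gopen G A) (hAcpt : compact_set (@gopen G) A)
  (phi : G -> rat) (hphi : hom_to_rat phi)
  (hker : forall x, phi x = 0 <-> A x)
  (hinf : infinite_image (fun _ => True) phi) :
  exists H : gset G,
    [/\ subgroup H,
        discrete_subset H,
        (* H ≅ G/A (≅ phi(G)) *)
        (exists psi : G -> rat,
           [/\ forall x y, H x -> H y -> psi (gmul x y) = psi x + psi y,
               forall x y, H x -> H y -> psi x = psi y -> x = y &
               forall q, (exists h, H h /\ psi h = q) <-> (exists g, phi g = q)]),
        (* G = A H *)
        (forall g, exists a h, [/\ A a, H h & g = gmul a h]) &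
        (* A ∩ H = {1} *)
        (forall x, A x -> H x -> x = gone G)].
Proof. by apply: (@main_result G A phi). Qed.
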